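(* Let $0\le t_r\le n$ and suppose at most $f\le n-t_r$ of the $n$ nodes fail. Then the algorithm TLCR described in the context, where the $k$-th call to TLCR on a node constitutes that node's $k$-th logical time-step, implements a $\mathrm{TSB}(t_r,0,0)$ communication primitive.
   Context: Asynchronous network model. There are $n$ nodes numbered $1,\dots,n$; nodes may fail only by crashing permanently, after which they send no messages. A network-level Broadcast sends a message to all $n$ nodes (including the sender). Every message sent to a node that does not fail is eventually delivered after an arbitrary finite delay, and messages between each pair of nodes are delivered in the order sent. $\mathrm{Receive}()$ waits for and returns the next delivered message. Algorithm TLCR (node $i$, receive threshold $t_r$). Persistent state: a list $\vec R$ of sets, initially the one-element list $[\{\}]$; $\vec R_k$ denotes its $k$-th element. On a call $\mathrm{TLCR}(m)$: append $\{\}$ to $\vec R$ and let $s=|\vec R|$; network-broadcast $\langle i,m,s,\vec R_{s-1}\rangle$; while $|\vec R_s|<t_r$: receive $\langle j,m',s',R'\rangle$; if $s'=s$, set $\vec R_s\leftarrow\vec R_s\cup\{\langle j,m'\rangle\}$; else if $s'>s$, set $\vec R_s\leftarrow\vec R_s\cup R'$ (messages with $s'<s$ are ignored). Return $(\{m'\mid\langle j,m'\rangle\in\vec R_s\},\{\})$. Threshold synchronous broadcast. A primitive, called once per logical time-step by each non-failed node with a message $m$ and returning a pair $(R,B)$ of message sets, provides $\mathrm{TSB}(t_r,t_b,t_s)$ if: (lock-step synchrony) a call at step $s$ returns (completing step $s$) unless the node fails first; (receive threshold) if node $i$'s call at step $s$ returns $(R,B)$, there is $N_R\subseteq\{1,\dots,n\}$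 with $|N_R|\ge t_r$ such that $R$ is exactly the set of messages broadcast by the nodes of $N_R$ in step $s$; (broadcast threshold) there is $N_B\subseteq\{1,\dots,n\}$ with $|N_B|\ge t_b$ such that $B$ is exactly the set of messages broadcast by the nodes of $N_B$ in step $s$; (spread threshold) each $m'\in B$ returned to any node at step $s$ is contained in the receive sets $R$ returned in step $s$ to at least $t_s$ nodes (counting nodes that fail before completing step $s$ but would otherwise have received $m'$). *)

(* Defs.v *)
From mathcomp Require Import all_boot.
Set Implicit Arguments. Unset Strict Implicit. Unset Printing Implicit Defensive.

Section Model.
Variables (n : nat) (M : eqType).

Record Msg := mkMsg { msrc : 'I_n; mbody : M; mstep : nat; mset : seq ('I_n * M) }.

(* Local state of a node:
   Rv      : the persistent list R (R_k = nth [::] Rv k.-1, 1-based), initially [:: [::]]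
   waiting : the node is inside a call to TLCR (in the receive loop)
   crashed : the node has crashed
   hist    : the messages m passed to its successive TLCR calls (k-th call = k-th entry) *)
Record Node := mkNode { Rv : seq (seq ('I_n * M)); waiting : bool; crashed : bool; hist : seq M }.

(* Global state: local states, FIFO channels chan j i (from j to i, head = oldest),
   and per-node inbox of delivered-but-not-yet-received messages (head = next). *)
Record State := mkState { nd : 'I_n -> Node; chan : 'I_n -> 'I_n -> seq Msg; inbox : 'I_n -> seq Msg }.

Definition upd {T : Type} (f : 'I_n -> T) (i : 'I_n) (x : T) : 'I_n -> T :=
  fun j => if j == i then x else f j.

Definition init : State :=
  mkState (fun _ => mkNode [:: [::]] false false [::]) (fun _ _ => [::]) (fun _ => [::]).

Definition rcard (r : seq ('I_n * M)) : nat := size (undup r).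

Inductive label :=
| LCall of 'I_n & M                       (* node calls TLCR(m): append {}, broadcast *)
| LCallCrash of 'I_n & M & {set 'I_n}     (* node calls TLCR(m), its broadcast reaches only
                                             the given subset, and it crashes *)
| LCrash of 'I_n
| LDeliver of 'I_n & 'I_n                 (* LDeliver j i: deliver head of chan j i to i *)
| LRecv of 'I_n.                          (* node executes Receive() in its loop *)

Variable tr : nat.

Definition call_node (i : 'I_n) (x : Node) (m : M) : Node * Msg :=
  let Rl := rcons (Rv x) [::] in
  let s := size Rl in
  let msg := mkMsg i m s (nth [::] Rl (s - 2)) in
  (mkNode Rl (rcard (nth [::] Rl s.-1) < tr) (crashed x) (rcons (hist x) m), msg).

Definition recv_node (x : Node) (msg : Msg) : Node :=
  let s := size (Rv x) in
  let Rs := nth [::] (Rv x) s.-1 in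
  let Rs' := if mstep msg == s then rcons Rs (msrc msg, mbody msg)
             else if s < mstep msg then Rs ++ mset msg else Rs in
  mkNode (set_nth [::] (Rv x) s.-1 Rs') (rcard Rs' < tr) (crashed x) (hist x).

Definition set_crashed (x : Node) : Node := mkNode (Rv x) (waiting x) true (hist x).

Definition apply (l : label) (st : State) : option State :=
  match l with
  | LCall i m =>
      let x := nd st i in
      if ~~ crashed x && ~~ waiting x then
        let (x', msg) := call_node i x m in
        Some (mkState (upd (nd st) i x')
                      (fun j k => if j == i then rcons (chan st j k) msg else chan st j k)
                      (inbox st))
      else None
  | LCallCrash i m Sd =>
      let x := nd st i in
      if ~~ crashed x && ~~ waiting x then
        let (x', msg) := call_node i x m in
        Some (mkState (upd (nd st) i (set_crashed x'))
                      (fun j k => if (j == i) && (k \in Sd) then rcons (chan st j k) msg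
                                  else chan st j k)
                      (inbox st))
      else None
  | LCrash i =>
      let x := nd st i in
      if ~~ crashed x then Some (mkState (upd (nd st) i (set_crashed x)) (chan st) (inbox st))
      else None
  | LDeliver j i =>
      match chan st j i with
      | msg :: rest =>
          Some (mkState (nd st)
                        (fun a b => if (a == j) && (b == i) then rest else chan st a b)
                        (upd (inbox st) i (rcons (inbox st i) msg)))
      | [::] => None
      end
  | LRecv i =>
      let x := nd st i in
      if ~~ crashed x && waiting x then
        match inbox st i with
        | msg :: rest => Some (mkState (upd (nd st) i (recv_node x msg)) (chan st)
                                       (upd (inbox st) i rest))
        | [::] => None
        end
      else None
  end.

(* An (infinite) execution: a sequence of states and of actions (None = stuttering). *)
Definition execution (ex : nat -> State) (lab : nat -> option label) : Prop :=
  ex 0 = init /\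
  forall t, match lab t with
            | None => ex t.+1 = ex t
            | Some l => apply l (ex t) = Some (ex t.+1)
            end.

Definition correct (ex : nat -> State) (i : 'I_n) : Prop :=
  forall t, ~~ crashed (nd (ex t) i).

(* Fairness: every message sent to a non-failing node is eventually delivered;
   a non-failing node waiting in Receive() with a delivered message eventually
   receives it; a non-failing node eventually makes its next call to TLCR
   (TLCR is called once per logical time-step by each non-failed node). *)
Definition fair (ex : nat -> State) (lab : nat -> option label) : Prop :=
  (forall t (j i : 'I_n), correct ex i -> chan (ex t) j i <> [::] ->
     exists2 t', t <= t' & lab t' = Some (LDeliver j i)) /\
  (forall t (i : 'I_n), correct ex i -> waiting (nd (ex t) i) -> inbox (ex t) i <> [::] ->
     exists2 t', t <= t' & lab t' = Some (LRecv i)) /\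
  (forall t (i : 'I_n), correct ex i -> ~~ waiting (nd (ex t) i) ->
     exists2 t', t <= t' & exists m, lab t' = Some (LCall i m)).

Definition at_most_fail (f : nat) (ex : nat -> State) : Prop :=
  exists F : {set 'I_n}, #|F| <= f /\ forall i t, crashed (nd (ex t) i) -> i \in F.

(* Logical time-steps are numbered k = 1, 2, ...: the k-th call is step k. *)
Definition bcast (ex : nat -> State) (j : 'I_n) (k : nat) (m : M) : Prop :=
  exists t, k <= size (hist (nd (ex t) j)) /\ nth m (hist (nd (ex t) j)) k.-1 = m.

Definition called (ex : nat -> State) (i : 'I_n) (k : nat) : Prop :=
  exists t, k <= size (hist (nd (ex t) i)).

Definition returned (st : State) (i : 'I_n) (k : nat) : bool :=
  let x := nd st i in (k < size (hist x)) || ((k == size (hist x)) && ~~ waiting x).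

(* TSB(t_r,t_b,t_s), for return values given by retR / retB (the sets R, B
   returned by node i for step k, read in the state right after the return). *)
Definition TSB (tr tb ts : nat) (ex : nat -> State)
    (retR retB : State -> 'I_n -> nat -> M -> Prop) : Prop :=
  (forall i k, 0 < k -> called ex i k ->
     exists t, returned (ex t) i k \/ crashed (nd (ex t) i)) /\
  (forall i k t, 0 < k -> ~~ returned (ex t) i k -> returned (ex t.+1) i k ->
     (exists NR : {set 'I_n}, tr <= #|NR| /\
        (forall j, j \in NR -> exists m, bcast ex j k m) /\
        (forall m, retR (ex t.+1) i k m <-> exists2 j, j \in NR & bcast ex j k m)) /\
     (exists NB : {set 'I_n}, tb <= #|NB| /\
        (forall j, j \in NB -> exists m, bcast ex j k m) /\
        (forall m, retB (ex t.+1) i k m <-> exists2 j, j \in NB & bcast ex j k m)) /\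
     (forall m, retB (ex t.+1) i k m ->
        exists T : {set 'I_n}, ts <= #|T| /\
          forall j, j \in T ->
            (exists t', ~~ returned (ex t') j k /\ returned (ex t'.+1) j k /\
                        retR (ex t'.+1) j k m) \/
            ((exists t', crashed (nd (ex t') j)) /\ forall t', ~~ returned (ex t') j k))).

(* The pair returned by TLCR at logical step k: ({m' | <j,m'> in R_{k+1}}, {}),
   since the k-th call uses index s = k+1 of the list R. *)
Definition tlcrR (st : State) (i : 'I_n) (k : nat) (m : M) : Prop :=
  exists j : 'I_n, (j, m) \in nth [::] (Rv (nd st i)) k.
Definition tlcrB (st : State) (i : 'I_n) (k : nat) (m : M) : Prop := False.

End Model.

(* Main.v *)
Require Import Defs.
From mathcomp Require Import all_boot.
From Stdlib Require Import Classical Lia.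
From mathcomp Require Import zify.
Set Implicit Arguments. Unset Strict Implicit. Unset Printing Implicit Defensive.

Section S.
Variables (n : nat) (M : eqType) (tr : nat).
Local Notation St := (State n M).
Local Notation Mg := (Msg n M).
Local Notation Nd := (Node n M).

Fixpoint allP (P : Mg -> Prop) (s : seq Mg) : Prop :=
  match s with [::] => True | x :: s' => P x /\ allP P s' end.

Lemma allP_cat P s1 s2 : allP P (s1 ++ s2) <-> allP P s1 /\ allP P s2.
Proof. elim: s1 => [|x s IH] /=; first by tauto. rewrite IH; tauto. Qed.

Lemma allP_rcons P s x : allP P (rcons s x) <-> allP P s /\ P x.
Proof. by rewrite -cats1 allP_cat /=; tauto. Qed.

Lemma allP_filter P p s : allP P s -> allP P (filter p s).
Proof. elim: s => [|x s IH] //= [h1 h2]; case: (p x) => /=; auto. Qed.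

Lemma allP_impl (P Q : Mg -> Prop) s : (forall x, P x -> Q x) -> allP P s -> allP Q s.
Proof. move=> H; elim: s => [|x s IH] //= [h1 h2]; auto. Qed.

Lemma apply_call (st st' : St) (i : 'I_n) (m : M) : apply tr (LCall i m) st = Some st' ->
  ~~ crashed (nd st i) /\ ~~ waiting (nd st i) /\
  st' = mkState (upd (nd st) i (mkNode (rcons (Rv (nd st i)) [::]) (0 < tr) (crashed (nd st i)) (rcons (hist (nd st i)) m)))
     (fun j k => if j == i then rcons (chan st j k) (mkMsg i m (size (Rv (nd st i))).+1 (nth [::] (Rv (nd st i)) (size (Rv (nd st i))).-1)) else chan st j k)
     (inbox st).
Proof.
rewrite /=; case: ifP => // /andP[h1 h2] [<-]; split => //; split => //.
rewrite /call_node size_rcons nth_rcons ltnn eqxx /rcard /= subn2 /=.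
rewrite nth_rcons; case: (Rv (nd st i)) => [|a s] //=.
by rewrite ltnS leqnn.
Qed.

Lemma apply_callc (st st' : St) (i : 'I_n) (m : M) Sd : apply tr (LCallCrash i m Sd) st = Some st' ->
  ~~ crashed (nd st i) /\ ~~ waiting (nd st i) /\
  st' = mkState (upd (nd st) i (mkNode (rcons (Rv (nd st i)) [::]) (0 < tr) true (rcons (hist (nd st i)) m)))
     (fun j k => if (j == i) && (k \in Sd) then rcons (chan st j k) (mkMsg i m (size (Rv (nd st i))).+1 (nth [::] (Rv (nd st i)) (size (Rv (nd st i))).-1)) else chan st j k)
     (inbox st).
Proof.
rewrite /=; case: ifP => // /andP[h1 h2] [<-]; split => //; split => //.
rewrite /call_node /set_crashed /= size_rcons nth_rcons ltnn eqxx /rcard /= subn2 /=.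
rewrite nth_rcons; case: (Rv (nd st i)) => [|a s] //=.
by rewrite ltnS leqnn.
Qed.

Lemma apply_crash (st st' : St) (i : 'I_n) : apply tr (LCrash M i) st = Some st' ->
  ~~ crashed (nd st i) /\ st' = mkState (upd (nd st) i (set_crashed (nd st i))) (chan st) (inbox st).
Proof. by rewrite /=; case: ifP => // h [<-]. Qed.

Lemma apply_deliver (st st' : St) (a b : 'I_n) : apply tr (LDeliver M a b) st = Some st' ->
  exists g rest, chan st a b = g :: rest /\
  st' = mkState (nd st) (fun x y => if (x == a) && (y == b) then rest else chan st x y)
                  (upd (inbox st) b (rcons (inbox st b) g)).
Proof. rewrite /=; case: (chan st a b) => [|g rest] // [<-]; by exists g, rest. Qed.

Lemma apply_recv (st st' : St) (i : 'I_n) : apply tr (LRecv M i) st = Some st' ->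
  ~~ crashed (nd st i) /\ waiting (nd st i) /\ exists g rest, inbox st i = g :: rest /\
  st' = mkState (upd (nd st) i (recv_node tr (nd st i) g)) (chan st) (upd (inbox st) i rest).
Proof.
rewrite /=; case: ifP => // /andP[h1 h2]; case: (inbox st i) => [|g rest] // [<-].
split => //; split => //; by exists g, rest.
Qed.

Lemma updE T (f : 'I_n -> T) i x j : upd f i x j = if j == i then x else f j.
Proof. by []. Qed.

Definition pend (st : St) (j i : 'I_n) : seq Mg :=
  [seq g <- inbox st i | msrc g == j] ++ chan st j i.
Definition sz (st : St) i := size (Rv (nd st i)).
Definition nw (x : Nd) : nat := if waiting x then 0 else 1.
Definition fifo (st : St) j i := exists c,
  map (@mstep n M) (pend st j i) = iota c (size (pend st j i)) /\
  (pend st j i <> [::] -> c <= sz st i + 1 + nw (nd st i)) /\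
  (~~ crashed (nd st j) -> c + size (pend st j i) = (sz st j).+1 /\
     (pend st j i = [::] -> sz st j <= sz st i + nw (nd st i))).
Definition nodeinv (x : Nd) := size (Rv x) = (size (hist x)).+1 /\
  (waiting x -> 2 <= size (Rv x)) /\
  (2 <= size (Rv x) -> waiting x = (rcard (nth [::] (Rv x) (size (Rv x)).-1) < tr)).

Variable B : 'I_n -> nat -> M -> Prop.
Definition setsinv (x : Nd) := forall idx p m, 0 < idx -> (p, m) \in nth [::] (Rv x) idx -> B p idx m.
Definition msgok (g : Mg) := 2 <= mstep g /\ B (msrc g) (mstep g).-1 (mbody g) /\
  (3 <= mstep g -> tr <= rcard (mset g) /\ forall p m, (p, m) \in mset g -> B p (mstep g).-2 m).
Definition Inv (st : St) :=
  (forall i, nodeinv (nd st i) /\ setsinv (nd st i)) /\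
  (forall a b, allP (fun g => msrc g = a /\ msgok g) (chan st a b)) /\
  (forall b, allP msgok (inbox st b)) /\
  (forall j i, fifo st j i).
Definition histB (st : St) := forall i k m, 0 < k <= size (hist (nd st i)) ->
  nth m (hist (nd st i)) k.-1 = m -> B i k m.

Lemma rcard_catr (a b : seq ('I_n * M)) : rcard b <= rcard (a ++ b).
Proof.
rewrite /rcard; apply: uniq_leq_size; first exact: undup_uniq.
by move=> x; rewrite !mem_undup mem_cat => ->; rewrite orbT.
Qed.

Lemma node_step l (st st' : St) i : apply tr l st = Some st' ->
  nd st' i = nd st i \/ nd st' i = set_crashed (nd st i)
  \/ (exists m, (l = LCall i m \/ exists Sd, l = LCallCrash i m Sd) /\ ~~ crashed (nd st i) /\ ~~ waiting (nd st i) /\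
      hist (nd st' i) = rcons (hist (nd st i)) m /\ Rv (nd st' i) = rcons (Rv (nd st i)) [::] /\ waiting (nd st' i) = (0 < tr))
  \/ (l = LRecv M i /\ exists g rest, inbox st i = g :: rest /\ ~~ crashed (nd st i) /\ waiting (nd st i) /\ nd st' i = recv_node tr (nd st i) g).
Proof.
case: l => [a m|a m Sd|a|a b|a].
- move/apply_call => [h1 [h2 ->]] /=; rewrite updE; case: eqP => [->|_]; last by left.
  right; right; left; exists m; split; first by left. done.
- move/apply_callc => [h1 [h2 ->]] /=; rewrite updE; case: eqP => [->|_]; last by left.
  right; right; left; exists m; split; first by right; exists Sd. done.
- move/apply_crash => [h1 ->] /=; rewrite updE; case: eqP => [->|_]; [by right; left | by left].
- move/apply_deliver => [g [rest [_ ->]]] /=; by left.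
- move/apply_recv => [h1 [h2 [g [rest [E ->]]]]] /=; rewrite updE; case: eqP => [->|_]; last by left.
  right; right; right; split => //; exists g, rest; done.
Qed.

Lemma recv_size (x : Nd) g : 0 < size (Rv x) -> size (Rv (recv_node tr x g)) = size (Rv x).
Proof. by move=> h; rewrite /= size_set_nth prednK // maxnn. Qed.

Lemma pend_step l (st st' : St) j i : Inv st -> apply tr l st = Some st' ->
  (pend st' j i = pend st j i /\ (sz st' j = sz st j \/ crashed (nd st' j)))
  \/ (exists g, pend st' j i = rcons (pend st j i) g /\ ~~ crashed (nd st j) /\ sz st' j = (sz st j).+1 /\ mstep g = sz st' j)
  \/ (l = LRecv M i /\ exists g rest, inbox st i = g :: rest /\ msrc g = j /\ pend st j i = g :: pend st' j i /\ (forall x, sz st' x = sz st x)).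
Proof.
move=> [Hn [Hc [Hi Hf]]].
case: l => [a m|a m Sd|a|a b|a].
- move/apply_call => [h1 [h2 ->]]; rewrite /pend /sz /= !updE.
  case: (eqVneq j a) => [->|ne].
  + right; left; eexists; rewrite -rcons_cat; split; first reflexivity.
    by rewrite /= size_rcons.
  + by left; split => //; left.
- move/apply_callc => [h1 [h2 ->]]; rewrite /pend /sz /= !updE.
  case: (eqVneq j a) => [->|ne] /=.
  + case: ifP => iS.
    * right; left; eexists; rewrite -rcons_cat; split; first reflexivity.
      by rewrite /= size_rcons.
    * by left; split => //; right.
  + by left; split => //; left.
- move/apply_crash => [h1 ->]; rewrite /pend /sz /= !updE.
  left; split => //; left; by case: eqP => [->|].
- move/apply_deliver => [g [rest [E ->]]]; rewrite /pend /sz /= !updE.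
  left; split; last by left.
  case: (eqVneq i b) => [->|ne] /=; last by rewrite andbF.
  rewrite andbT filter_rcons.
  have := Hc a b; rewrite E /= => -[[Hg _] _].
  case: (eqVneq j a) => [->|ne] /=.
  * by rewrite Hg eqxx cat_rcons E.
  * by rewrite Hg eq_sym (negbTE ne).
- move=> H; have [h1 [h2 [g [rest [E Est']]]]] := apply_recv H.
  have szE : forall x, sz st' x = sz st x.
    move=> x; rewrite /sz Est' /= updE; case: eqP => [->|//].
    by rewrite recv_size //; case: (Hn a) => [[-> _] _].
  have Ei : inbox st' i = if i == a then rest else inbox st i by rewrite Est' /= updE.
  have Ec : chan st' j i = chan st j i by rewrite Est'.
  rewrite /pend Ei Ec.
  case: (eqVneq i a) => [ia|ne].
  + subst i; rewrite E /=; case: (eqVneq (msrc g) j) => [eg|ne].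
    * right; right; split => //; exists g, rest; split => //; split => //; split => //.
    * left; split; [by [] | by left; apply: szE].
  + left; split => //; by left; apply: szE.
Qed.

Lemma szw_mono l (st st' : St) x : Inv st -> apply tr l st = Some st' ->
  sz st x + nw (nd st x) <= sz st' x + nw (nd st' x).
Proof.
move=> [Hn _] H; rewrite /sz; case: (node_step x H) => [->//|[->//|[[m [_ [_ [w [_ [-> _]]]]]]|[_ [g [rest [_ [_ [w ->]]]]]]]]].
- rewrite size_rcons /nw (negbTE w) addn1; case: waiting => /=; lia.
- rewrite recv_size; last by case: (Hn x) => [[-> _] _].
  rewrite /nw w; lia.
Qed.

Lemma crash_mono l (st st' : St) x : apply tr l st = Some st' ->
  ~~ crashed (nd st' x) -> ~~ crashed (nd st x).
Proof.
move=> H; case: (node_step x H) => [->//|[->//|[[m [_ [c _]]]|[_ [g [rest [_ [c _]]]]]]]] //.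
Qed.

Lemma recv_facts (st st' : St) i : Inv st -> apply tr (LRecv M i) st = Some st' ->
  exists g rest, inbox st i = g :: rest /\ waiting (nd st i) /\ 2 <= sz st i /\ msgok g /\
   mstep g <= (sz st i).+1 /\ (sz st i < mstep g -> ~~ waiting (nd st' i)) /\
   mstep g <= sz st' i + nw (nd st' i) /\ nd st' i = recv_node tr (nd st i) g.
Proof.
move=> [Hn [Hc [Hi Hf]]] H; have [h1 [h2 [g [rest [E Est']]]]] := apply_recv H.
have ndE : nd st' i = recv_node tr (nd st i) g by rewrite Est' /= updE eqxx.
have [[Hs [Hw _]] _] := Hn i.
have s2 := Hw h2.
have gok : msgok g by have := Hi i; rewrite E => -[].
have gle : mstep g <= (sz st i).+1.
  have [c [Hm [Hb _]]] := Hf (msrc g) i.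
  move: Hm Hb; rewrite /pend E /= eqxx /= => -[-> _].
  by rewrite /nw h2 addn0 addn1; apply.
have kick : sz st i < mstep g -> ~~ waiting (nd st' i).
  move=> lt; rewrite ndE /=.
  rewrite -/(sz st i) (gtn_eqF lt) lt -leqNgt.
  case: gok => _ [_ /(_ _) [|le _]]; first by apply: leq_ltn_trans lt.
  exact: leq_trans le (rcard_catr _ _).
exists g, rest; do 7 (split => //).
have szE : sz st' i = sz st i by rewrite /sz ndE recv_size // Hs.
rewrite szE; case: (ltngtP (mstep g) (sz st i)) => [lt|gt|->]; last by rewrite leq_addr.
- by rewrite ltnW // ltn_addr.
- have := kick gt; rewrite /nw; case: waiting => //= _.
  by rewrite addn1.
Qed.

Lemma fifo_step l (st st' : St) j i : Inv st -> apply tr l st = Some st' -> fifo st' j i.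
Proof.
move=> HI H; have mono := szw_mono i HI H; have cm := crash_mono (x:=j) H.
have [c [Hm [Hb Hcr]]] := (HI.2.2.2 j i).
case: (pend_step j i HI H) => [[pE sE]|[[g [pE [ncj [sE gE]]]]|[lE [g [rest [E [gj [pE sE]]]]]]]].
- exists c; rewrite pE; split => //; split.
  + by move=> /Hb; lia.
  + move=> nc; have := Hcr (cm nc); case: sE => [sE|]; last by rewrite (negbTE nc).
    rewrite sE => -[h1 h2]; split => // /h2; lia.
- exists c; rewrite pE map_rcons size_rcons Hm.
  have [h1 h2] := Hcr ncj.
  split; first by rewrite -addn1 iotaD /= -cats1 h1 gE sE.
  split; last by move=> _; rewrite sE; split => //; [lia | case: (pend st j i)].
  move=> _; case E0: (pend st j i) => [|x s].
  + have := h2 E0; move: h1; rewrite E0 /= addn0 => ->; lia.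
  + have : c <= sz st i + 1 + nw (nd st i) by apply: Hb; rewrite E0.
    lia.
- subst l; have [g' [rest' [E' [_ [_ [_ [_ [_ [gle _]]]]]]]]] := recv_facts HI H.
  move: E'; rewrite E => -[eg _]; subst g'.
  move: Hm Hcr; rewrite pE /= => -[<- Hm] Hcr.
  exists (mstep g).+1; split => //; split.
  + move=> _; lia.
  + move=> nc; have [h1 h2] := Hcr (cm nc); rewrite sE; split; first lia.
    move=> e; move: h1; rewrite e /=; lia.
Qed.

Lemma recv_nodeinv (x : Nd) g : nodeinv x -> waiting x -> nodeinv (recv_node tr x g).
Proof.
move=> [Hs [Hw Heq]] w; have s2 := Hw w.
rewrite /nodeinv /= size_set_nth prednK ?maxnn; last by apply: leq_trans s2.
rewrite nth_set_nth /= eqxx; split => //; split => //.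
Qed.

Lemma recv_setsinv (x : Nd) g : setsinv x -> 2 <= size (Rv x) -> msgok g ->
  mstep g <= (size (Rv x)).+1 -> setsinv (recv_node tr x g).
Proof.
move=> Hset s2 [g2 [gB gm]] gle idx p m0 i0; rewrite /= nth_set_nth /=.
case: eqP => [ei|_]; last exact: Hset.
case: eqP => [es|ne].
- rewrite mem_rcons inE => /orP [/eqP [-> ->]|h]; first by rewrite ei -es.
  by apply: Hset => //; rewrite ei.
- case: ifP => lt.
  + rewrite mem_cat => /orP [h|h]; first by apply: Hset => //; rewrite ei.
    have e : mstep g = (size (Rv x)).+1 by apply/eqP; rewrite eqn_leq gle lt.
    have h3 : 3 <= mstep g by rewrite e ltnS.
    have [_ hb] := gm h3.
    by move: (hb _ _ h); rewrite e ei.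
  + by move=> h; apply: Hset => //; rewrite ei.
Qed.

Lemma newmsg_ok (st st' : St) c m : Inv st -> histB st' -> ~~ waiting (nd st c) ->
  hist (nd st' c) = rcons (hist (nd st c)) m ->
  msgok (mkMsg c m (size (Rv (nd st c))).+1 (nth [::] (Rv (nd st c)) (size (Rv (nd st c))).-1)).
Proof.
move=> [Hn _] hB nwt hE; have [[Hs [Hw Heq]] Hset] := Hn c.
rewrite /msgok /=; split; first by rewrite Hs.
split.
- apply: hB; first by rewrite hE size_rcons Hs leqnn.
  by rewrite hE Hs /= nth_rcons ltnn eqxx.
- move=> h3; have s2 : 2 <= size (Rv (nd st c)) by [].
  split; first by move: nwt; rewrite (Heq s2) -leqNgt.
  move=> p m0 hin; apply: Hset hin; rewrite /=; lia.
Qed.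

Lemma inv_step l (st st' : St) : Inv st -> histB st' -> apply tr l st = Some st' -> Inv st'.
Proof.
move=> HI hB H; have [Hn [Hc [Hi Hf]]] := HI.
split; last split; last split; last by move=> j i; exact: fifo_step HI H.
- move=> i; case: (node_step i H) => [->|[->|[[m [lE [nc [nwt [hE [rE wE]]]]]]|[lE [g [rest [E [nc [w ndE]]]]]]]]].
  + exact: Hn i.
  + exact: Hn i.
  + have [[Hs _] Hset] := Hn i.
    split.
    * rewrite /nodeinv hE rE wE !size_rcons Hs; split => //; split => // _.
      by rewrite nth_rcons -Hs ltnn eqxx.
    * move=> idx p m0 i0; rewrite rE nth_rcons; case: ifP => [lt|_]; first exact: Hset.
      by case: ifP.
  + subst l; have [g' [rest' [E' [w' [s2 [gok [gle [_ [_ ndE']]]]]]]]] := recv_facts HI H.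
    move: E'; rewrite E => -[eg _]; subst g'.
    have [Hni Hset] := Hn i.
    rewrite ndE; split; first exact: recv_nodeinv.
    exact: recv_setsinv.
- move=> a b; case: l H => [c m|c m Sd|c|c d|c] H.
  + have [nc [nwt E]] := apply_call H; rewrite E /=.
    case: eqP => [ac|_]; last exact: Hc.
    subst a; apply/allP_rcons; split; first exact: Hc.
    split => //; apply: (newmsg_ok HI hB nwt); by rewrite E /= updE eqxx.
  + have [nc [nwt E]] := apply_callc H; rewrite E /=.
    case: ifP => [/andP[/eqP ac _]|_]; last exact: Hc.
    subst a; apply/allP_rcons; split; first exact: Hc.
    split => //; apply: (newmsg_ok HI hB nwt); by rewrite E /= updE eqxx.
  + by have [_ ->] := apply_crash H; apply: Hc.
  + have [g [rest [Ec E]]] := apply_deliver H; rewrite E /=.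
    case: ifP => [/andP[/eqP ac /eqP bd]|_]; last exact: Hc.
    subst a b.
    by have := Hc c d; rewrite Ec => -[].
  + by have [_ [_ [g [rest [_ ->]]]]] := apply_recv H; apply: Hc.
- move=> b; case: l H => [c m|c m Sd|c|c d|c] H.
  + by have [_ [_ ->]] := apply_call H; apply: Hi.
  + by have [_ [_ ->]] := apply_callc H; apply: Hi.
  + by have [_ ->] := apply_crash H; apply: Hi.
  + have [g [rest [Ec E]]] := apply_deliver H; rewrite E /= updE.
    case: eqP => [_|_]; last exact: Hi.
    apply/allP_rcons; split; first exact: Hi.
    by have := Hc c d; rewrite Ec => -[[]].
  + have [_ [_ [g [rest [E ->]]]]] := apply_recv H; rewrite /= updE.
    case: eqP => [_|_]; last exact: Hi.
    by have := Hi c; rewrite E => -[].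
Qed.

Lemma inv_init : Inv (init n M).
Proof.
split; [|split; [|split]].
- move=> i; split; first by split.
  by rewrite /setsinv /= => -[|[|idx]] p m.
- by [].
- by [].
- move=> j i; exists 2; rewrite /pend /=; split => //.
Qed.

Definition u (st : St) j i := if pend st j i is g :: _ then mstep g else (sz st j).+1.

Lemma fifo_u (st : St) j i : fifo st j i -> ~~ crashed (nd st j) ->
  map (@mstep n M) (pend st j i) = iota (u st j i) (size (pend st j i)) /\
  u st j i + size (pend st j i) = (sz st j).+1.
Proof.
move=> [c [Hm [_ Hcr]]] nc; have [h1 _] := Hcr nc.
suff -> : u st j i = c by [].
move: Hm h1; rewrite /u; case: (pend st j i) => [|g s] /=; first by rewrite addn0 => _ ->.
by move=> [-> _].
Qed.

Lemma u_step l (st st' : St) j i : Inv st -> apply tr l st = Some st' -> ~~ crashed (nd st' j) ->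
  u st' j i = u st j i \/
  (l = LRecv M i /\ exists g rest, inbox st i = g :: rest /\ msrc g = j /\ mstep g = u st j i /\
     u st' j i = (u st j i).+1).
Proof.
move=> HI H nc'; have nc := crash_mono (x:=j) H nc'.
case: (pend_step j i HI H) => [[pE sE]|[[g [pE [ncj [sE gE]]]]|[lE [g [rest [E [gj [pE sE]]]]]]]].
- left; case: sE => [sE|]; last by rewrite (negbTE nc').
  by rewrite /u pE sE.
- left; rewrite /u pE; case: (pend st j i) => [|h s] //=.
  by rewrite gE sE.
- right; split => //; exists g, rest; split => //; split => //.
  have [Hm Hs] := fifo_u (HI.2.2.2 j i) nc.
  have ug : u st j i = mstep g by rewrite /u pE.
  split => //.
  move: Hm Hs; rewrite pE ug /= => -[Hm] Hs.
  rewrite /u; move: Hm Hs; case: (pend st' j i) => [|h s] /=.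
  + by rewrite sE addn1 => _ [->].
  + by move=> [-> _].
Qed.

Lemma u_cons (st st' : St) j i g rest : Inv st -> apply tr (LRecv M i) st = Some st' ->
  inbox st i = g :: rest -> msrc g = j -> ~~ crashed (nd st j) ->
  u st j i = mstep g /\ u st' j i = (u st j i).+1.
Proof.
move=> HI H E gj nc.
case: (pend_step j i HI H) => [[pE sE]|[[g' [pE [ncj [sE gE]]]]|[lE [g' [rest' [E' [gj' [pE sE]]]]]]]].
- exfalso; move: pE; rewrite /pend; have [_ [_ [g2 [r2 [E2 ->]]]]] := apply_recv H.
  move: E2; rewrite E => -[<- <-]; rewrite /= updE eqxx gj eqxx /= => /(f_equal size).
  rewrite /= !size_cat /=; lia.
- exfalso; move: pE; rewrite /pend; have [_ [_ [g2 [r2 [E2 ->]]]]] := apply_recv H.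
  move: E2; rewrite E => -[<- <-]; rewrite /= updE eqxx gj eqxx /= => /(f_equal size).
  rewrite /= size_rcons !size_cat /=; lia.
- move: E'; rewrite E => -[eg _]; subst g'.
  have [Hm Hs] := fifo_u (HI.2.2.2 j i) nc.
  have ug : u st j i = mstep g by rewrite /u pE.
  split => //.
  move: Hm Hs; rewrite pE ug /= => -[Hm] Hs.
  rewrite /u; move: Hm Hs; case: (pend st' j i) => [|h s] /=.
  + by rewrite sE addn1 => _ [->].
  + by move=> [-> _].
Qed.

Lemma ex_min (P : nat -> Prop) : (exists t, P t) -> exists t, P t /\ forall t', P t' -> t <= t'.
Proof.
move=> [t0 Pt0]; apply: NNPP => Hn.
suff : forall t s, s <= t -> ~ P s by move/(_ t0 t0 (leqnn _)).
elim=> [|t IH] s.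
- rewrite leqn0 => /eqP -> P0; apply: Hn; exists 0; split => // t' _.
- rewrite leq_eqVlt => /orP [/eqP ->|]; last by apply: IH.
  move=> Ps; apply: Hn; exists t.+1; split => // t' Pt'.
  rewrite leqNgt; apply/negP => lt; exact: (IH t' lt).
Qed.

Lemma fin_bound (Q : 'I_n -> nat -> Prop) :
  (forall j, exists t, forall t', t <= t' -> Q j t') -> exists T, forall j t', T <= t' -> Q j t'.
Proof.
move=> H.
suff [T HT] : exists T, forall j, j \in enum 'I_n -> forall t', T <= t' -> Q j t'.
  by exists T => j t' le; apply: HT => //; rewrite mem_enum.
elim: (enum 'I_n) => [|a s [T HT]]; first by exists 0.
have [Ta HTa] := H a.
exists (maxn T Ta) => j; rewrite inE => /orP [/eqP ->|js] t' le.
- by apply: HTa; apply: leq_trans le; apply: leq_maxr.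
- by apply: HT => //; apply: leq_trans le; apply: leq_maxl.
Qed.
End S.

Section Exec.
Variables (n : nat) (M : eqType) (tr : nat) (ex : nat -> State n M) (lab : nat -> option (label n M)).
Hypothesis Hex : execution tr ex lab.
Local Notation St := (State n M).
Local Notation Mg := (Msg n M).

Lemma step_or t : ex t.+1 = ex t \/ exists l, lab t = Some l /\ apply tr l (ex t) = Some (ex t.+1).
Proof.
have := Hex.2 t; case: (lab t) => [l|]; last by left.
by move=> H; right; exists l.
Qed.

Lemma histB_all t : histB (bcast ex) (ex t).
Proof. by move=> i k m /andP [_ hk] hn; exists t. Qed.

Lemma inv_all t : Inv tr (bcast ex) (ex t).
Proof.
elim: t => [|t IH]; first by rewrite Hex.1; apply: inv_init.
case: (step_or t) => [->//|[l [_ H]]].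
exact: inv_step IH (@histB_all t.+1) H.
Qed.

Lemma node_or t i : nd (ex t.+1) i = nd (ex t) i \/ nd (ex t.+1) i = set_crashed (nd (ex t) i)
  \/ (exists m, (lab t = Some (LCall i m) \/ exists Sd, lab t = Some (LCallCrash i m Sd)) /\ ~~ crashed (nd (ex t) i) /\ ~~ waiting (nd (ex t) i) /\
      hist (nd (ex t.+1) i) = rcons (hist (nd (ex t) i)) m /\ Rv (nd (ex t.+1) i) = rcons (Rv (nd (ex t) i)) [::] /\ waiting (nd (ex t.+1) i) = (0 < tr))
  \/ (lab t = Some (LRecv M i) /\ exists g rest, inbox (ex t) i = g :: rest /\ ~~ crashed (nd (ex t) i) /\ waiting (nd (ex t) i) /\ nd (ex t.+1) i = recv_node tr (nd (ex t) i) g).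
Proof.
case: (step_or t) => [->|[l [lE H]]]; first by left.
rewrite lE; case: (node_step i H) => [->|[->|[[m [[->|[Sd ->]] rest]]|[-> rest]]]]; auto.
- by right; right; left; exists m; split => //; left.
- by right; right; left; exists m; split => //; right; exists Sd.
Qed.

Lemma hist_step t i : exists s, hist (nd (ex t.+1) i) = hist (nd (ex t) i) ++ s.
Proof.
case: (node_or t i) => [->|[->|[[m [_ [_ [_ [-> _]]]]]|[_ [g [rest [_ [_ [_ ->]]]]]]]]].
- by exists [::]; rewrite cats0.
- by exists [::]; rewrite cats0.
- by exists [:: m]; rewrite cats1.
- by exists [::]; rewrite cats0.
Qed.

Lemma hist_prefix t d i : exists s, hist (nd (ex (t + d)) i) = hist (nd (ex t) i) ++ s.
Proof.
elim: d => [|d [s IH]]; first by exists [::]; rewrite addn0 cats0.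
have [s' E] := hist_step (t + d) i.
by exists (s ++ s'); rewrite addnS E IH catA.
Qed.

Lemma hist_mono t t' i : t <= t' -> size (hist (nd (ex t) i)) <= size (hist (nd (ex t') i)).
Proof. move=> le; have [s E] := hist_prefix t (t' - t) i; rewrite subnKC // in E; by rewrite E size_cat leq_addr. Qed.

Lemma bcast_fun j k m m' : 0 < k -> bcast ex j k m -> bcast ex j k m' -> m = m'.
Proof.
move=> k0 [t1 [h1 e1]] [t2 [h2 e2]].
have key : forall t t' a b, t <= t' -> k <= size (hist (nd (ex t) j)) ->
    nth a (hist (nd (ex t) j)) k.-1 = a -> nth b (hist (nd (ex t') j)) k.-1 = b -> a = b.
  move=> t t' a b le hk ea eb; have [s E] := hist_prefix t (t' - t) j.
  rewrite subnKC // in E; rewrite E nth_cat in eb.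
  have lt : k.-1 < size (hist (nd (ex t) j)) by rewrite prednK.
  by rewrite lt (set_nth_default a) // ea in eb.
case: (leqP t1 t2) => le; first exact: key le h1 e1 e2.
by apply/esym; apply: key (ltnW le) h2 e2 e1.
Qed.

Lemma crashed_step t i : crashed (nd (ex t) i) -> crashed (nd (ex t.+1) i).
Proof.
case: (node_or t i) => [->//|[->//|[[m [_ [c _]]]|[_ [g [rest [_ [c _]]]]]]]] h; by rewrite h in c.
Qed.

Lemma sz_step t i : sz (ex t) i <= sz (ex t.+1) i.
Proof.
rewrite /sz; case: (node_or t i) => [->//|[->//|[[m [_ [_ [_ [_ [-> _]]]]]]|[_ [g [rest [_ [_ [_ ->]]]]]]]]].
- by rewrite size_rcons.
- by rewrite recv_size //; have [Hn _] := inv_all t; have [[-> _] _] := Hn i.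
Qed.

Lemma sz_mono t t' i : t <= t' -> sz (ex t) i <= sz (ex t') i.
Proof.
move=> le; rewrite -(subnKC le); elim: (t' - t) => [|d IH]; first by rewrite addn0.
by apply: leq_trans IH _; rewrite addnS; apply: sz_step.
Qed.

Lemma returned_step t i k : returned (ex t) i k -> returned (ex t.+1) i k.
Proof.
rewrite /returned; case: (node_or t i) => [->//|[->//|[[m [_ [_ [w [-> _]]]]]|[_ [g [rest [_ [_ [w ->]]]]]]]]].
- rewrite size_rcons (negbTE w) /= andbT => /orP [lt|/eqP ->]; first by rewrite ltnS ltnW.
  by rewrite ltnS leqnn.
- by rewrite w /= andbF orbF => ->.
Qed.

Lemma returned_mono t t' i k : t <= t' -> returned (ex t) i k -> returned (ex t') i k.
Proof.
move=> le; rewrite -(subnKC le); elim: (t' - t) => [|d IH]; first by rewrite addn0.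
by move=> h; rewrite addnS; apply: returned_step; apply: IH.
Qed.

Lemma ret_trans t i k : ~~ returned (ex t) i k -> returned (ex t.+1) i k ->
  k = size (hist (nd (ex t.+1) i)) /\ ~~ waiting (nd (ex t.+1) i).
Proof.
rewrite /returned; case: (node_or t i) => [->|[->|[[m [_ [_ [w [-> [_ wE]]]]]]|[_ [g [rest [_ [_ [w ->]]]]]]]]].
- by move/negbTE => ->.
- by move/negbTE => /= ->.
- rewrite size_rcons (negbTE w) /= negb_or => /andP [h1 h2] /orP [h|/andP [/eqP -> ->]] //.
  exfalso; move: h1 h2 h; rewrite -leqNgt ltnS => h1 h2 h3.
  by move: h2; have -> : k == size (hist (nd (ex t) i)) by rewrite eqn_leq h1 h3.
- rewrite /= w /= andbF orbF => h /orP [h'|/andP [/eqP -> ->]] //.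
  by rewrite h' in h.
Qed.

Hypothesis Hfair : fair ex lab.

Definition cons t i j x := lab t = Some (LRecv M i) /\
  exists g rest, inbox (ex t) i = g :: rest /\ msrc g = j /\ mstep g = x.

Lemma u_step_t t j i : correct ex j -> u (ex t.+1) j i = u (ex t) j i \/
  (cons t i j (u (ex t) j i) /\ u (ex t.+1) j i = (u (ex t) j i).+1).
Proof.
move=> cj; case: (step_or t) => [->|[l [lE H]]]; first by left.
case: (u_step i (inv_all t) H (cj t.+1)) => [->|[lR [g [rest [E [gj [gu ue]]]]]]]; first by left.
right; split => //; split; first by rewrite lE lR.
by exists g, rest.
Qed.

Lemma u_nondec j i t t' : correct ex j -> t <= t' -> u (ex t) j i <= u (ex t') j i.
Proof.
move=> cj le; rewrite -(subnKC le); elim: (t' - t) => [|d IH]; first by rewrite addn0.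
apply: leq_trans IH _; rewrite addnS.
by case: (u_step_t (t + d) i cj) => [->|[_ ->]].
Qed.

Lemma u_mono j i t d y : correct ex j -> u (ex t) j i <= y < u (ex (t + d)) j i ->
  exists t0, t <= t0 < t + d /\ cons t0 i j y.
Proof.
move=> cj; elim: d => [|d IH]; first by rewrite addn0 => /andP [h1 h2]; move: (leq_ltn_trans h1 h2); rewrite ltnn.
move=> /andP [h1 h2]; rewrite addnS in h2.
case: (ltnP y (u (ex (t + d)) j i)) => h3.
- have [t0 [/andP [a b] c]] := IH (introT andP (conj h1 h3)).
  by exists t0; rewrite a addnS ltnS ltnW.
- case: (u_step_t (t + d) i cj) => [e|[c e]]; first by rewrite e ltnNge h3 in h2.
  rewrite e ltnS in h2.
  have ye : y = u (ex (t + d)) j i by apply/eqP; rewrite eqn_leq h2 h3.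
  by exists (t + d); rewrite leq_addr addnS ltnS leqnn ye.
Qed.

Lemma nohas_filter (T : Type) (p : pred T) s : ~~ has p s -> filter p s = [::].
Proof. by elim: s => [|x s IH] //= /norP [/negbTE -> /IH]. Qed.

Lemma inbox_nrecv t i : (forall a, lab t = Some (LRecv M a) -> a != i) ->
  exists s, inbox (ex t.+1) i = inbox (ex t) i ++ s.
Proof.
move=> nr; case: (step_or t) => [->|[l [lE H]]]; first by exists [::]; rewrite cats0.
case: l lE H => [c m|c m Sd|c|c d|c] lE H.
- by have [_ [_ ->]] := apply_call H; exists [::]; rewrite cats0.
- by have [_ [_ ->]] := apply_callc H; exists [::]; rewrite cats0.
- by have [_ ->] := apply_crash H; exists [::]; rewrite cats0.
- have [g [rest [_ ->]]] := apply_deliver H; rewrite /= updE.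
  by case: eqP => [->|_]; [exists [:: g]; rewrite cats1 | exists [::]; rewrite cats0].
- have [_ [_ [g [rest [_ ->]]]]] := apply_recv H; rewrite /= updE.
  by rewrite eq_sym (negbTE (nr c lE)); exists [::]; rewrite cats0.
Qed.

Section Phase.
Variables (i j : 'I_n) (T : nat).
Hypothesis ci : correct ex i.
Hypothesis wT : forall t, T <= t -> waiting (nd (ex t) i).
Let p := fun g : Mg => msrc g == j.
Let Goal t := exists t', t <= t' /\ lab t' = Some (LRecv M i) /\
   exists g rest, inbox (ex t') i = g :: rest /\ msrc g = j.

Lemma inbox_phase q t : T <= t -> q = find p (inbox (ex t) i) -> has p (inbox (ex t) i) -> Goal t.
Proof.
elim/ltn_ind: q t => q IH t Tt qE hs.
have recvcase : forall t, T <= t -> lab t = Some (LRecv M i) -> q = find p (inbox (ex t) i) ->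
    has p (inbox (ex t) i) -> Goal t.
  move=> t2 Tt2 L qE2 hs2.
  have := Hex.2 t2; rewrite L => H.
  have [_ [_ [g [rest [E E']]]]] := apply_recv H.
  have inb : inbox (ex t2.+1) i = rest by rewrite E' /= updE eqxx.
  move: qE2 hs2; rewrite E /=; case: ifP => pg.
  + by move=> _ _; exists t2; split => //; split => //; exists g, rest; split => //; apply/eqP.
  + move=> qE2 hs2.
    have [t' [a b]] : Goal t2.+1.
      apply: (IH (find p rest)); first by rewrite qE2.
      * by apply: leq_trans Tt2 _.
      * by rewrite inb.
      * by rewrite inb.
    by exists t'; split => //; apply: ltnW.
have [_ [F2 _]] := Hfair.
have ne : inbox (ex t) i <> [::] by move: hs; case: (inbox (ex t) i).
have [t1 t1t L1] := F2 t i ci (wT Tt) ne.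
suff H : forall d t, T <= t -> t1 = t + d -> q = find p (inbox (ex t) i) -> has p (inbox (ex t) i) -> Goal t.
  by apply: (H (t1 - t)) => //; rewrite subnKC.
elim=> [|d IHd] t2 Tt2 e qE2 hs2; first by apply: recvcase => //; rewrite -L1 e addn0.
have nonrecv : (forall a, lab t2 = Some (LRecv M a) -> a != i) -> Goal t2.
  move=> nr; have [s es] := inbox_nrecv nr.
  have [t' [a b]] : Goal t2.+1.
    apply: IHd; [by apply: leq_trans Tt2 _ | by rewrite e addnS | by rewrite es find_cat hs2 | by rewrite es has_cat hs2].
  by exists t'; split => //; apply: ltnW.
case E: (lab t2) => [l|]; last by apply: nonrecv => a; rewrite E.
case: l E => [c m|c m Sd|c|c d'|c] E; try (by apply: nonrecv => a; rewrite E).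
case: (eqVneq c i) => [ce|cne]; first by subst c; apply: recvcase.
by apply: nonrecv => a; rewrite E => -[<-].
Qed.

Lemma progress t : T <= t -> pend (ex t) j i <> [::] -> Goal t.
Proof.
move=> Tt hp; case hs: (has p (inbox (ex t) i)); first by apply: (@inbox_phase (find p (inbox (ex t) i))).
have cne : chan (ex t) j i <> [::].
  by move: hp; rewrite /pend nohas_filter ?hs.
have [F1 _] := Hfair.
have [t1 t1t L1] := F1 t j i ci cne.
have := Hex.2 t1; rewrite L1 => H.
have [g [rest [Ec E]]] := apply_deliver H.
have gj : msrc g = j.
  by have [_ [Hc _]] := inv_all t1; have := Hc j i; rewrite Ec => -[[]].
have hs1 : has p (inbox (ex t1.+1) i).
  by rewrite E /= updE eqxx has_rcons /p gj eqxx.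
have [t' [a b]] := @inbox_phase _ t1.+1 (leq_trans Tt (leq_trans t1t (leqnSn _))) erefl hs1.
by exists t'; split => //; apply: leq_trans a; apply: leq_trans t1t _.
Qed.

End Phase.

Lemma reach i j T (ci : correct ex i) (cj : correct ex j) (wT : forall t, T <= t -> waiting (nd (ex t) i)) :
  forall d t x, T <= t -> x - u (ex t) j i = d -> u (ex t) j i <= x -> x <= sz (ex t) j ->
  exists t', t <= t' /\ cons t' i j x.
Proof.
elim/ltn_ind => d IH t x Tt dE ux xs.
have hp : pend (ex t) j i <> [::].
  have [_ Hs] := fifo_u ((inv_all t).2.2.2 j i) (cj t).
  move=> e; move: Hs; rewrite e addn0 => us; move: ux xs; rewrite us; lia.
have [t' [tt' [L [g [rest [E gj]]]]]] := progress ci wT Tt hp.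
have H : apply tr (LRecv M i) (ex t') = Some (ex t'.+1) by have := Hex.2 t'; rewrite L.
have [ug ue] := u_cons (inv_all t') H E gj (cj t').
have mono := u_nondec i cj tt'.
case: (ltngtP (u (ex t') j i) x) => c.
- have h1 : x - u (ex t'.+1) j i < d by rewrite ue -dE; lia.
  have h2 : u (ex t'.+1) j i <= x by rewrite ue.
  have [t'' [a b]] := IH (x - u (ex t'.+1) j i) h1 t'.+1 x
    (leq_trans Tt (leq_trans tt' (leqnSn _))) erefl h2 (leq_trans xs (sz_mono j (leq_trans tt' (leqnSn _)))).
  by exists t''; split => //; apply: leq_trans a; apply: leq_trans tt' _.
- have h : u (ex t) j i <= x < u (ex (t + (t' - t))) j i by rewrite subnKC // ux c.
  have [t0 [/andP [a _] b]] := @u_mono j i t (t' - t) x cj h.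
  by exists t0.
- exists t'; split => //; split => //; exists g, rest; split => //; split => //.
  by rewrite -ug.
Qed.

Lemma reach2 i j T (ci : correct ex i) (cj : correct ex j) (wT : forall t, T <= t -> waiting (nd (ex t) i)) t t2 x :
  T <= t -> t <= t2 -> u (ex t) j i <= x -> x <= sz (ex t2) j -> exists t', t <= t' /\ cons t' i j x.
Proof.
move=> Tt tt2 ux xs.
case: (leqP (u (ex t2) j i) x) => c.
- have [t' [a b]] := reach ci cj wT (leq_trans Tt tt2) erefl c xs.
  by exists t'; split => //; apply: leq_trans a.
- have h : u (ex t) j i <= x < u (ex (t + (t2 - t))) j i by rewrite subnKC // ux c.
  have [t0 [/andP [a _] b]] := @u_mono j i t (t2 - t) x cj h.
  by exists t0.
Qed.

Lemma rcard_ge (R : seq ('I_n * M)) (A : {set 'I_n}) :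
  (forall j, j \in A -> exists m, (j, m) \in R) -> #|A| <= rcard R.
Proof.
move=> H; rewrite /rcard -(size_map fst); apply: leq_trans (card_size _).
apply: subset_leq_card; apply/subsetP => j jA.
have [m hm] := H j jA; apply/mapP; exists (j, m) => //; by rewrite mem_undup.
Qed.

Lemma szE t i : sz (ex t) i = (size (hist (nd (ex t) i))).+1.
Proof. by have [Hn _] := inv_all t; have [[h _] _] := Hn i; rewrite /sz h. Qed.

Lemma stuck_le i k t : (forall t, ~~ returned (ex t) i k) -> size (hist (nd (ex t) i)) <= k.
Proof. by move=> H; have := H t; rewrite /returned negb_or => /andP [h _]; rewrite leqNgt. Qed.

Lemma stuck_after i k t0 t : (forall t, ~~ returned (ex t) i k) -> k <= size (hist (nd (ex t0) i)) -> t0 <= t ->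
  size (hist (nd (ex t) i)) = k /\ waiting (nd (ex t) i).
Proof.
move=> H h0 le.
have e : size (hist (nd (ex t) i)) = k.
  by apply/eqP; rewrite eqn_leq (stuck_le t H) (leq_trans h0 (hist_mono i le)).
split => //; have := H t; rewrite /returned e ltnn eqxx /=; by case: waiting.
Qed.

Lemma kick i k j x t : (forall t, ~~ returned (ex t) i k) -> cons t i j x -> x <= k.+1.
Proof.
move=> Hst [L [g [rest [E [gj gx]]]]].
have H : apply tr (LRecv M i) (ex t) = Some (ex t.+1) by have := Hex.2 t; rewrite L.
have [g' [rest' [E' [w [s2 [gok [gle [kk [_ ndE]]]]]]]]] := recv_facts (inv_all t) H.
move: E'; rewrite E => -[eg _]; subst g'.
have hs := stuck_le t Hst; have sE := szE t i.
rewrite leqNgt; apply/negP => lt.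
have lt2 : sz (ex t) i < mstep g by rewrite gx sE; lia.
have nw' := kk lt2.
have hk : size (hist (nd (ex t) i)) = k by move: gle; rewrite gx sE; lia.
have := Hst t.+1; rewrite /returned ndE /= hk ltnn eqxx /=.
by move: nw'; rewrite ndE /= => ->.
Qed.

Lemma pair_add i k j t t0 : (forall t, ~~ returned (ex t) i k) -> k <= size (hist (nd (ex t0) i)) -> t0 <= t ->
  cons t i j k.+1 -> exists m, (j, m) \in nth [::] (Rv (nd (ex t.+1) i)) k.
Proof.
move=> Hst h0 le [L [g [rest [E [gj gx]]]]].
have H : apply tr (LRecv M i) (ex t) = Some (ex t.+1) by have := Hex.2 t; rewrite L.
have [g' [rest' [E' [w [s2 [gok [gle [kk [_ ndE]]]]]]]]] := recv_facts (inv_all t) H.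
move: E'; rewrite E => -[eg _]; subst g'.
have [hk _] := stuck_after Hst h0 le.
have rs : size (Rv (nd (ex t) i)) = k.+1 by have := szE t i; rewrite hk.
exists (mbody g); rewrite ndE /= nth_set_nth /= rs /= eqxx gx eqxx.
by rewrite mem_rcons inE gj eqxx.
Qed.

Lemma pair_keep i k t0 t j m : (forall t, ~~ returned (ex t) i k) -> k <= size (hist (nd (ex t0) i)) -> t0 <= t ->
  (j, m) \in nth [::] (Rv (nd (ex t) i)) k -> (j, m) \in nth [::] (Rv (nd (ex t.+1) i)) k.
Proof.
move=> Hst h0 le.
have [hk _] := stuck_after Hst h0 le.
have rs : size (Rv (nd (ex t) i)) = k.+1 by have := szE t i; rewrite hk.
case: (node_or t i) => [->//|[->//|[[m' [_ [_ [_ [hE _]]]]]|[_ [g [rest [_ [_ [_ ->]]]]]]]]].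
- have := stuck_le t.+1 Hst; rewrite hE size_rcons hk ltnn //.
- rewrite /= nth_set_nth /= rs /= eqxx => hin.
  case: eqP => _; first by rewrite mem_rcons inE hin orbT.
  by case: ifP => _ //; rewrite mem_cat hin.
Qed.

Lemma pair_keep_mono i k t0 t d j m : (forall t, ~~ returned (ex t) i k) -> k <= size (hist (nd (ex t0) i)) -> t0 <= t ->
  (j, m) \in nth [::] (Rv (nd (ex t) i)) k -> (j, m) \in nth [::] (Rv (nd (ex (t + d)) i)) k.
Proof.
move=> Hst h0 le h; elim: d => [|d IH]; first by rewrite addn0.
rewrite addnS; apply: (pair_keep Hst h0) => //; exact: leq_trans le (leq_addr _ _).
Qed.

Lemma ret_called i k t : correct ex i -> returned (ex t) i k -> exists t', k.+1 <= size (hist (nd (ex t') i)).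
Proof.
move=> ci; rewrite /returned => /orP [lt|/andP [/eqP ke w]]; first by exists t.
have [_ [_ F3]] := Hfair.
have [t1 t1t [m L]] := F3 t i ci w.
have H : apply tr (LCall i m) (ex t1) = Some (ex t1.+1) by have := Hex.2 t1; rewrite L.
have [_ [_ E]] := apply_call H.
exists t1.+1; rewrite E /= updE eqxx /= size_rcons ltnS ke.
exact: hist_mono.
Qed.

Variable f : nat.
Hypothesis Hfail : at_most_fail f ex.
Hypothesis Hfn : f <= n - tr.
Hypothesis Htr : tr <= n.

Lemma claim k : forall i, correct ex i -> exists t, returned (ex t) i k.
Proof.
elim: k => [|k IH] i ci.
  by exists 0; rewrite Hex.1 /returned /=.
have called_all : forall j, correct ex j -> exists t, k.+1 <= size (hist (nd (ex t) j)).
  by move=> j cj; have [t rt] := IH j cj; exact: ret_called cj rt.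
apply: NNPP => nret.
have Hst : forall t, ~~ returned (ex t) i k.+1.
  by move=> t; apply/negP => h; apply: nret; exists t.
have [Tc TcK] := called_all i ci.
have wT : forall t, Tc <= t -> waiting (nd (ex t) i).
  by move=> t le; have [_ ->] := stuck_after Hst TcK le.
case: (classic (exists j, correct ex j /\ exists t, returned (ex t) j k.+1)) => [[j [cj [tj rj]]]|none].
- have [tj' hj] := ret_called cj rj.
  have ubound : forall t, u (ex t) j i <= k.+3.
    move=> t; rewrite leqNgt; apply/negP => lt.
    have u0 : u (ex 0) j i = 2 by rewrite /u /pend /sz Hex.1.
    have h : u (ex 0) j i <= k.+3 < u (ex (0 + t)) j i by rewrite u0 add0n lt.
    have [t0 [_ c]] := u_mono cj h.
    by have := kick Hst c; rewrite ltnn.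
  set t2 := maxn Tc tj'.
  have xs : k.+3 <= sz (ex t2) j.
    rewrite szE ltnS; apply: leq_trans hj _; apply: hist_mono; exact: leq_maxr.
  have [t' [_ c]] := reach2 ci cj wT (leq_maxl Tc tj') (leqnn t2) (ubound t2) xs.
  by have := kick Hst c; rewrite ltnn.
- have [F [cardF Fcr]] := Hfail.
  have corrF : forall j, j \in ~: F -> correct ex j.
    move=> j; rewrite inE => jF t; apply/negP => c; move: (Fcr j t c); by rewrite (negbTE jF).
  have tr0 : 0 < tr.
    have [h1 h2] := stuck_after Hst TcK (leqnn Tc).
    have [Hn _] := inv_all Tc; have [[hs [_ he]] _] := Hn i.
    have s2 : 2 <= size (Rv (nd (ex Tc) i)) by rewrite hs h1.
    by move: h2; rewrite (he s2); case: tr.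
  have cardC : tr <= #|~: F|.
    have := cardsC F; rewrite card_ord => e; move: Htr Hfn cardF; lia.
  have [j1 j1F] : exists j1, j1 \in ~: F.
    by apply/card_gt0P; apply: leq_trans cardC.
  have [t0 [[j0 [j0F h0]] tmin]] := @ex_min (fun t => exists j, j \in ~: F /\ k.+1 <= size (hist (nd (ex t) j)))
    (let: ex_intro t ht := called_all j1 (corrF j1 j1F) in ex_intro _ t (ex_intro _ j1 (conj j1F ht))).
  case: t0 h0 tmin => [|t1] h0 tmin.
    by move: h0; rewrite Hex.1.
  have before : forall j, j \in ~: F -> size (hist (nd (ex t1) j)) < k.+1.
    move=> j jF; rewrite ltnNge; apply/negP => h.
    by have := tmin t1 (ex_intro _ j (conj jF h)); rewrite ltnn.
  have cj0 := corrF j0 j0F.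
  have Hst0 : forall t, ~~ returned (ex t) j0 k.+1.
    by move=> t; apply/negP => h; apply: none; exists j0; split => //; exists t.
  have wT0 : forall t, t1.+1 <= t -> waiting (nd (ex t) j0).
    by move=> t le; have [_ ->] := stuck_after Hst0 h0 le.
  have notrecv : ~ (lab t1 = Some (LRecv M j0)).
    move=> L; have := before j0 j0F.
    case: (node_or t1 j0) => [e|[e|[[m [[L'|[Sd L']] _]]|[_ [g [rest [_ [_ [_ e]]]]]]]]];
      try by rewrite L in L'.
    all: try (move=> b; move: h0; rewrite e /=; lia).
  have eventually : forall j, exists t, forall t', t <= t' ->
      j \in ~: F -> exists m, (j, m) \in nth [::] (Rv (nd (ex t') j0)) k.+1.
    move=> j; case jF: (j \in ~: F); last by exists 0.
    have cj := corrF j jF.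
    have u1 : u (ex t1) j j0 <= k.+2.
      have [_ Hs] := fifo_u ((inv_all t1).2.2.2 j j0) (cj t1).
      have := before j jF; rewrite -ltnS -(szE t1 j) => b; lia.
    have u0 : u (ex t1.+1) j j0 <= k.+2.
      case: (u_step_t t1 j0 cj) => [->//|[[L _] _]].
      by exfalso; apply: notrecv.
    have [tj hj] := called_all j cj.
    set t2 := maxn t1.+1 tj.
    have xs : k.+2 <= sz (ex t2) j.
      rewrite szE ltnS; apply: leq_trans hj _; apply: hist_mono; exact: leq_maxr.
    have [t' [tt' c]] := reach2 cj0 cj wT0 (leqnn _) (leq_maxl _ _) u0 xs.
    have [m hm] := pair_add Hst0 h0 tt' c.
    exists t'.+1 => t'' le _; exists m.
    have lt1 : t1.+1 <= t'.+1 by apply: leq_trans tt' (leqnSn _).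
    have := @pair_keep_mono j0 k.+1 t1.+1 t'.+1 (t'' - t'.+1) j m Hst0 h0 lt1 hm.
    by rewrite subnKC.
  have [Ts HTs] := fin_bound eventually.
  set tt := maxn Ts t1.+1.
  have [h1 h2] := stuck_after Hst0 h0 (leq_maxr Ts t1.+1 : t1.+1 <= tt).
  have [Hn _] := inv_all tt; have [[hs [_ he]] _] := Hn j0.
  have s2 : 2 <= size (Rv (nd (ex tt) j0)) by rewrite hs h1.
  move: h2; rewrite (he s2) hs h1 /=.
  have : #|~: F| <= rcard (nth [::] (Rv (nd (ex tt) j0)) k.+1).
    apply: rcard_ge => j jF; exact: HTs j tt (leq_maxl _ _) jF.
  lia.
Qed.

Lemma tsb : TSB tr 0 0 ex (@tlcrR n M) (@tlcrB n M).
Proof.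
split.
- move=> i k k0 _; case: (classic (correct ex i)) => ci.
  + by have [t r] := claim k ci; exists t; left.
  + have [t ht] := not_all_ex_not _ _ ci; exists t; right.
    by move: ht; case: crashed.
move=> i k t k0 nr r.
have [kE w] := ret_trans nr r.
have [Hn _] := inv_all t.+1; have [[hs [_ he]] Hset] := Hn i.
set x := nd (ex t.+1) i in kE w hs he Hset *.
have rs : size (Rv x) = k.+1 by rewrite hs -kE.
have s2 : 2 <= size (Rv x) by rewrite rs ltnS.
set R := nth [::] (Rv x) k.
have trR : tr <= rcard R by move: w; rewrite (he s2) rs /= -leqNgt.
have inR : forall p m, (p, m) \in R -> bcast ex p k m by move=> p m h; apply: Hset.
split; last split.
- exists [set p | p \in map fst R]; split; last split.
  + apply: leq_trans trR _.
    have u1 : uniq (map fst (undup R)).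
      rewrite map_inj_in_uniq ?undup_uniq //.
      move=> [p1 m1] [p2 m2]; rewrite !mem_undup /= => h1 h2 e; subst p2.
      by rewrite (bcast_fun k0 (inR _ _ h1) (inR _ _ h2)).
    rewrite /rcard -(size_map fst) -(card_uniqP u1).
    apply: subset_leq_card; apply/subsetP => p; rewrite inE => /mapP [[p' m'] h ->].
    by apply/mapP; exists (p', m'); rewrite // -mem_undup.
  + move=> j; rewrite inE => /mapP [[p' m'] h ->]; exists m'; exact: inR h.
  + move=> m; split.
    * move=> [j hj]; exists j; last exact: inR hj.
      by rewrite inE; apply/mapP; exists (j, m).
    * move=> [j]; rewrite inE => /mapP [[p' m'] h /= ->] hb.
      have e := bcast_fun k0 (inR _ _ h) hb; subst m'.
      by exists p'.
- exists set0; split => //; split; first by move=> j; rewrite in_set0.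
  by move=> m; split => [[]|[j]]; rewrite in_set0.
- by move=> m [].
Qed.

End Exec.

Theorem theorem2 (n tr f : nat) (M : eqType)
    (ex : nat -> State n M) (lab : nat -> option (label n M)) :
  tr <= n -> f <= n - tr ->
  execution tr ex lab -> fair ex lab -> at_most_fail f ex ->
  TSB tr 0 0 ex (@tlcrR n M) (@tlcrB n M).
Proof. move=> Htr Hfn Hex Hfair Hfail. have H := tsb Hex Hfair Hfail Hfn Htr. exact H. Qed.
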